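(* Let $N>0$ and $\tau\in(0,1)$. There exists a constant $C=C(\tau,N)>0$, depending only on $\tau$ and $N$, such that every radial solution $(v_1,v_2)$ of $(P)_\tau$ (as described in the context) satisfies $$v_1(r)+2(N+1)\log r\le C\quad\text{and}\quad v_2(r)+2\log r\le C\qquad\text{for all } r>0.$$
   Context: A radial solution of $(P)_\tau$ is a pair $v_1,v_2\in C([0,\infty))\cap C^2((0,\infty))$ with, for $r>0$, $$-(rv_1')'=r^{2N+1}e^{v_1}-\tau re^{v_2},\qquad -(rv_2')'=re^{v_2}-\tau r^{2N+1}e^{v_1},$$ $v_1'(0)=v_2'(0)=0$, $$\beta_1=\int_0^\infty r^{2N+1}e^{v_1}\,dr<\infty,\qquad \beta_2=\int_0^\infty re^{v_2}\,dr<\infty,$$ and $\lim_{r\to\infty}rv_1'(r)=-(\beta_1-\tau\beta_2)$, $\lim_{r\to\infty}rv_2'(r)=-(\beta_2-\tau\beta_1)$. *)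

(* Defs.v *)
From Stdlib Require Import Reals.
From Coquelicot Require Import Coquelicot.
Open Scope R_scope.

(* v belongs to C([0,oo)) /\ C^2((0,oo)) and v'(0) = 0 (one-sided derivative
   at 0, since v is only defined on [0,oo)). Values of v on (-oo,0) are
   irrelevant. *)
Definition radial_regular (v : R -> R) : Prop :=
  filterlim v (at_right 0) (locally (v 0)) /\
  (forall r, 0 < r ->
     ex_derive v r /\ ex_derive (Derive v) r /\ continuous (Derive_n v 2) r) /\
  filterlim (fun h => (v h - v 0) / h) (at_right 0) (locally 0).

Definition wgt (N r : R) : R := Rpower r (2 * N + 1).

Definition radial_solution (N tau : R) (v1 v2 : R -> R) (beta1 beta2 : R) : Prop :=
  radial_regular v1 /\ radial_regular v2 /\
  (forall r, 0 < r ->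
     is_derive (fun s => s * Derive v1 s) r
       (- (wgt N r * exp (v1 r) - tau * r * exp (v2 r)))) /\
  (forall r, 0 < r ->
     is_derive (fun s => s * Derive v2 s) r
       (- (r * exp (v2 r) - tau * wgt N r * exp (v1 r)))) /\
  is_RInt_gen (fun r => wgt N r * exp (v1 r)) (at_right 0) (Rbar_locally p_infty) beta1 /\
  is_RInt_gen (fun r => r * exp (v2 r)) (at_right 0) (Rbar_locally p_infty) beta2 /\
  is_lim (fun r => r * Derive v1 r) p_infty (- (beta1 - tau * beta2)) /\
  is_lim (fun r => r * Derive v2 r) p_infty (- (beta2 - tau * beta1)).

(* Main.v *)
Require Import Defs.
From Stdlib Require Import Reals Lra Psatz.
From Coquelicot Require Import Coquelicot.
Open Scope R_scope.

Lemma energy_deriv (a b t c: R) (p1 p2 v1 v2 : R->R) r d1 d2 e1 e2 :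
 0 < r -> is_derive p1 r d1 -> is_derive p2 r d2 -> is_derive v1 r e1 -> is_derive v2 r e2 ->
 is_derive (fun s => ((p1 s + a)^2 + 2*t*(p1 s + a)*(p2 s + b) + (p2 s + b)^2)/c + exp(a*ln s + v1 s) + exp(b*ln s + v2 s)) r
   ((2*(p1 r + a)*d1 + 2*t*(d1*(p2 r + b) + (p1 r + a)*d2) + 2*(p2 r + b)*d2)/c + exp(a*ln r + v1 r)*(a/r + e1) + exp(b*ln r + v2 r)*(b/r+e2)).
Proof.
intros hr h1 h2 h3 h4.
auto_derive.
- repeat split; try assumption; eexists; eassumption.
- replace (Derive (fun x => p1 x) r) with d1 by (symmetry; apply is_derive_unique; exact h1).
  replace (Derive (fun x => p2 x) r) with d2 by (symmetry; apply is_derive_unique; exact h2).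
  replace (Derive (fun x => v1 x) r) with e1 by (symmetry; apply is_derive_unique; exact h3).
  replace (Derive (fun x => v2 x) r) with e2 by (symmetry; apply is_derive_unique; exact h4).
  unfold Rdiv; ring.
Qed.

Definition En (N tau : R) (v1 v2 : R -> R) (s : R) : R :=
  ((s * Derive v1 s + 2*(N+1))^2 + 2*tau*(s * Derive v1 s + 2*(N+1))*(s * Derive v2 s + 2)
   + (s * Derive v2 s + 2)^2)/(2*(1-tau^2))
  + exp(2*(N+1)*ln s + v1 s) + exp(2*ln s + v2 s).

Lemma energy_zero N tau v1 v2 b1 b2 t : 0 < tau < 1 -> radial_solution N tau v1 v2 b1 b2 ->
  0 < t -> is_derive (En N tau v1 v2) t 0.
Proof.
intros ht [R1 [R2 [O1 [O2 _]]]] htp.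
destruct R1 as [_ [D1 _]]. destruct R2 as [_ [D2 _]].
destruct (D1 t htp) as [e1 _]. destruct (D2 t htp) as [e2 _].
pose proof (energy_deriv (2*(N+1)) 2 tau (2*(1-tau^2)) _ _ v1 v2 t _ _ _ _ htp (O1 t htp) (O2 t htp)
   (Derive_correct _ _ e1) (Derive_correct _ _ e2)) as H.
unfold En.
match type of H with is_derive _ _ ?L => replace 0 with L; [exact H|] end.
assert (X1 : exp (2 * (N + 1) * ln t + v1 t) = t * (wgt N t * exp (v1 t))).
{ unfold wgt, Rpower.
  replace (2 * (N + 1) * ln t + v1 t) with (ln t + ((2*N+1)*ln t + v1 t)) by ring.
  rewrite !exp_plus, exp_ln by exact htp. ring. }
assert (X2 : exp (2 * ln t + v2 t) = t * (t * exp (v2 t))).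
{ replace (2 * ln t + v2 t) with (ln t + (ln t + v2 t)) by ring.
  rewrite !exp_plus, exp_ln by exact htp. ring. }
rewrite X1, X2. field. split; [lra|]. nra.
Qed.

Lemma energy_const N tau v1 v2 b1 b2 r s : 0 < tau < 1 -> radial_solution N tau v1 v2 b1 b2 ->
  0 < r -> 0 < s -> En N tau v1 v2 r = En N tau v1 v2 s.
Proof.
intros ht H hr hs.
destruct (Rtotal_order r s) as [Hl|[He|Hg]].
- apply eq_is_derive; [|exact Hl]. intros t Ht. apply (energy_zero N tau v1 v2 b1 b2); auto; lra.
- subst; reflexivity.
- symmetry. apply eq_is_derive; [|exact Hg]. intros t Ht. apply (energy_zero N tau v1 v2 b1 b2); auto; lra.
Qed.

Lemma cont_eps (v : R -> R) (e : R) : 0 < e -> filterlim v (at_right 0) (locally (v 0)) ->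
  exists d, 0 < d /\ forall x, 0 < x < d -> Rabs (v x - v 0) < e.
Proof.
intros he H0. pose proof (proj1 (filterlim_locally v (v 0)) H0) as H.
destruct (H (mkposreal e he)) as [d Hd].
exists d. split; [apply cond_pos|]. intros x [hx1 hx2].
apply (Hd x); [|exact hx1].
unfold ball; simpl. unfold AbsRing_ball, abs, minus, plus, opp; simpl.
rewrite Ropp_0, Rplus_0_r, Rabs_pos_eq; lra.
Qed.

Lemma mvt_point (v : R -> R) d h : (forall x, 0 < x -> ex_derive v x) ->
  (forall x, 0 < x < d -> Rabs (v x - v 0) < 1/8) -> 0 < h < d ->
  exists c, h/2 <= c <= h /\ Rabs (c * Derive v c) <= 1/2.
Proof.
intros Hd Hc Hh.
destruct (MVT_gen v (h/2) h (Derive v)) as [c [Hc1 Hc2]].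
- intros x Hx. apply Derive_correct, Hd.
  rewrite Rmin_left in Hx by lra. lra.
- intros x Hx. apply continuity_pt_filterlim; apply (ex_derive_continuous (K:=R_AbsRing) (V:=R_NormedModule)); apply Hd.
  rewrite Rmin_left in Hx by lra. lra.
- rewrite Rmin_left in Hc1 by lra. rewrite Rmax_right in Hc1 by lra.
  exists c. split; [exact Hc1|].
  assert (A1 := Hc h Hh). assert (A2 := Hc (h/2) ltac:(lra)).
  assert (Rabs (v h - v (h/2)) < 1/4).
  { replace (v h - v (h/2)) with ((v h - v 0) - (v (h/2) - v 0)) by ring.
    eapply Rle_lt_trans; [apply Rabs_triang|]. rewrite Rabs_Ropp. lra. }
  rewrite Hc2 in H. rewrite Rabs_mult in H. rewrite (Rabs_pos_eq (h - h/2)) in H by lra.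
  rewrite Rabs_mult, (Rabs_pos_eq c) by lra.
  assert (0 <= Rabs (Derive v c)) by apply Rabs_pos. nra.
Qed.

Lemma lip (p g : R -> R) d M c h : (forall x, 0 < x < d -> is_derive p x (g x)) ->
  (forall x, 0 < x < d -> Rabs (g x) <= M) -> 0 < c <= h -> h < d ->
  Rabs (p h - p c) <= M * (h - c).
Proof.
intros Hd HM Hc Hh.
destruct (Req_dec c h) as [E|E].
- subst. replace (p h - p h) with 0 by ring. rewrite Rabs_R0.
  replace (h - h) with 0 by ring. lra.
destruct (MVT_gen p c h g) as [x [Hx1 Hx2]].
- intros x Hx. apply Hd. rewrite Rmin_left in Hx by lra. rewrite Rmax_right in Hx by lra. lra.
- intros x Hx. apply continuity_pt_filterlim; apply (ex_derive_continuous (K:=R_AbsRing) (V:=R_NormedModule)). eexists. apply Hd.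
  rewrite Rmin_left in Hx by lra. rewrite Rmax_right in Hx by lra. lra.
- rewrite Rmin_left in Hx1 by lra. rewrite Rmax_right in Hx1 by lra.
  rewrite Hx2, Rabs_mult, (Rabs_pos_eq (h - c)) by lra.
  apply Rmult_le_compat_r; [lra|]. apply HM. lra.
Qed.

Lemma exp_le' x y : x <= y -> exp x <= exp y.
Proof. intros H; destruct (Rle_lt_or_eq_dec _ _ H) as [H'|H']; [left; apply exp_increasing; exact H'|subst; lra]. Qed.

Lemma ln_le' x y : 0 < x -> x <= y -> ln x <= ln y.
Proof. intros H0 H; destruct (Rle_lt_or_eq_dec _ _ H) as [H'|H']; [left; apply ln_increasing; assumption|subst; lra]. Qed.

Lemma small N tau v1 v2 b1 b2 : 0 < N -> 0 < tau < 1 -> radial_solution N tau v1 v2 b1 b2 ->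
  exists h, 0 < h /\ Rabs (h * Derive v1 h) <= 1 /\ Rabs (h * Derive v2 h) <= 1 /\
    exp (2*(N+1)*ln h + v1 h) <= 1 /\ exp (2*ln h + v2 h) <= 1.
Proof.
intros hN ht [[C1 [D1 _]] [[C2 [D2 _]] [O1 [O2 _]]]].
destruct (cont_eps v1 (1/8)) as [d1 [hd1 H1]]; [lra|exact C1|].
destruct (cont_eps v2 (1/8)) as [d2 [hd2 H2]]; [lra|exact C2|].
set (M := exp (v1 0 + 1) + exp (v2 0 + 1)).
assert (hM : 0 < M) by (unfold M; pose proof (exp_pos (v1 0 + 1)); pose proof (exp_pos (v2 0 + 1)); lra).
set (K := Rabs (v1 0) + Rabs (v2 0) + 1).
assert (hK : 1 <= K) by (unfold K; pose proof (Rabs_pos (v1 0)); pose proof (Rabs_pos (v2 0)); lra).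
assert (hEK : 0 < exp (- K) < 1).
{ split; [apply exp_pos|]. rewrite <- exp_0. apply exp_increasing. lra. }
set (dd := Rmin (Rmin d1 d2) 1).
assert (hdd : 0 < dd) by (apply Rmin_glb_lt; [apply Rmin_glb_lt|]; lra).
assert (Hdd : forall x, 0 < x < dd -> 0 < x < d1 /\ 0 < x < d2 /\ x < 1).
{ intros x Hx. pose proof (Rmin_l (Rmin d1 d2) 1). pose proof (Rmin_r (Rmin d1 d2) 1).
  pose proof (Rmin_l d1 d2). pose proof (Rmin_r d1 d2). fold dd in H, H0. lra. }
assert (Hwg : forall x, 0 < x < 1 -> 0 < wgt N x <= 1).
{ intros x Hx. unfold wgt, Rpower. split; [apply exp_pos|]. apply Rle_trans with (exp 0); [|rewrite exp_0; lra]. apply exp_le'.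
  assert (ln x < 0) by (rewrite <- ln_1; apply ln_increasing; lra). nra. }
assert (Hg1 : forall x, 0 < x < dd -> Rabs (-(wgt N x * exp (v1 x) - tau * x * exp (v2 x))) <= M).
{ intros x Hx. destruct (Hdd x Hx) as [A1 [A2 A3]].
  pose proof (Hwg x ltac:(lra)).
  destruct (Rabs_def2 _ _ (H1 x A1)). destruct (Rabs_def2 _ _ (H2 x A2)).
  assert (exp (v1 x) <= exp (v1 0 + 1)) by (apply exp_le'; lra).
  assert (exp (v2 x) <= exp (v2 0 + 1)) by (apply exp_le'; lra).
  pose proof (exp_pos (v1 x)). pose proof (exp_pos (v2 x)).
  assert (tau * x <= 1) by nra.
  assert (wgt N x * exp (v1 x) <= exp (v1 0 + 1)) by (assert (0 <= wgt N x) by nra; apply Rle_trans with (exp (v1 x)); [|assumption]; rewrite <- (Rmult_1_l (exp (v1 x))) at 2; apply Rmult_le_compat_r; lra).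
  assert (0 <= wgt N x * exp (v1 x)) by (apply Rmult_le_pos; lra).
  assert ((tau * x) * exp (v2 x) <= exp (v2 0 + 1)) by (assert (0 <= (tau * x)) by nra; apply Rle_trans with (exp (v2 x)); [|assumption]; rewrite <- (Rmult_1_l (exp (v2 x))) at 2; apply Rmult_le_compat_r; lra).
  assert (0 <= tau * x * exp (v2 x)) by (apply Rmult_le_pos; [apply Rmult_le_pos|]; lra).
  pose proof (exp_pos (v1 0 + 1)). pose proof (exp_pos (v2 0 + 1)).
  unfold M. apply Rabs_le. split; lra. }
assert (Hg2 : forall x, 0 < x < dd -> Rabs (-(x * exp (v2 x) - tau * wgt N x * exp (v1 x))) <= M).
{ intros x Hx. destruct (Hdd x Hx) as [A1 [A2 A3]].
  pose proof (Hwg x ltac:(lra)).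
  destruct (Rabs_def2 _ _ (H1 x A1)). destruct (Rabs_def2 _ _ (H2 x A2)).
  assert (exp (v1 x) <= exp (v1 0 + 1)) by (apply exp_le'; lra).
  assert (exp (v2 x) <= exp (v2 0 + 1)) by (apply exp_le'; lra).
  pose proof (exp_pos (v1 x)). pose proof (exp_pos (v2 x)).
  assert (tau * wgt N x <= 1) by nra.
  assert ((tau * wgt N x) * exp (v1 x) <= exp (v1 0 + 1)) by (assert (0 <= (tau * wgt N x)) by nra; apply Rle_trans with (exp (v1 x)); [|assumption]; rewrite <- (Rmult_1_l (exp (v1 x))) at 2; apply Rmult_le_compat_r; lra).
  assert (0 <= tau * wgt N x * exp (v1 x)) by (apply Rmult_le_pos; [apply Rmult_le_pos|]; lra).
  assert (x * exp (v2 x) <= exp (v2 0 + 1)) by (assert (0 <= x) by nra; apply Rle_trans with (exp (v2 x)); [|assumption]; rewrite <- (Rmult_1_l (exp (v2 x))) at 2; apply Rmult_le_compat_r; lra).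
  assert (0 <= x * exp (v2 x)) by (apply Rmult_le_pos; lra).
  pose proof (exp_pos (v1 0 + 1)). pose proof (exp_pos (v2 0 + 1)).
  unfold M. apply Rabs_le. split; lra. }
set (h := Rmin (dd/2) (Rmin (1/(2*M)) (exp (- K)))).
assert (hh0 : 0 < h).
{ apply Rmin_glb_lt; [lra|apply Rmin_glb_lt; [|lra]]. apply Rdiv_lt_0_compat; lra. }
assert (hh1 : h <= dd/2) by apply Rmin_l.
assert (hh2 : h <= 1/(2*M)) by (eapply Rle_trans; [apply Rmin_r|apply Rmin_l]).
assert (hh3 : h <= exp (-K)) by (eapply Rle_trans; [apply Rmin_r|apply Rmin_r]).
assert (hMh : M * h <= 1/2).
{ assert (h * (2*M) <= 1/(2*M) * (2*M)) by (apply Rmult_le_compat_r; lra).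
  replace (1/(2*M)*(2*M)) with 1 in H by (field; lra). lra. }
destruct (Hdd h ltac:(lra)) as [A1 [A2 A3]].
assert (hlnh : ln h <= - K) by (rewrite <- (ln_exp (-K)); apply ln_le'; lra).
exists h. split; [exact hh0|].
split; [|split; [|split]].
- destruct (mvt_point v1 d1 h (fun x Hx => proj1 (D1 x Hx)) (fun x Hx => H1 x Hx) ltac:(lra)) as [c [Hc1 Hc2]].
  pose proof (lip (fun s => s * Derive v1 s) (fun s => -(wgt N s * exp (v1 s) - tau * s * exp (v2 s)))
       dd M c h (fun x Hx => O1 x (proj1 Hx)) Hg1 ltac:(lra) ltac:(lra)) as L. cbv beta in L.
    replace (h * Derive v1 h) with ((h * Derive v1 h - c * Derive v1 c) + c * Derive v1 c) by ring.
    eapply Rle_trans; [apply Rabs_triang|]. nra.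
- destruct (mvt_point v2 d2 h (fun x Hx => proj1 (D2 x Hx)) (fun x Hx => H2 x Hx) ltac:(lra)) as [c [Hc1 Hc2]].
  pose proof (lip (fun s => s * Derive v2 s) (fun s => -(s * exp (v2 s) - tau * wgt N s * exp (v1 s)))
       dd M c h (fun x Hx => O2 x (proj1 Hx)) Hg2 ltac:(lra) ltac:(lra)) as L. cbv beta in L.
    replace (h * Derive v2 h) with ((h * Derive v2 h - c * Derive v2 c) + c * Derive v2 c) by ring.
    eapply Rle_trans; [apply Rabs_triang|]. nra.
- apply Rle_trans with (exp 0); [|rewrite exp_0; lra]. apply exp_le'.
  destruct (Rabs_def2 _ _ (H1 h A1)). pose proof (Rle_abs (v1 0)). pose proof (Rabs_pos (v2 0)).
  assert (ln h < 0) by (rewrite <- ln_1; apply ln_increasing; lra).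
  unfold K in hlnh. nra.
- apply Rle_trans with (exp 0); [|rewrite exp_0; lra]. apply exp_le'.
  destruct (Rabs_def2 _ _ (H2 h A2)). pose proof (Rle_abs (v2 0)). pose proof (Rabs_pos (v1 0)).
  assert (ln h < 0) by (rewrite <- ln_1; apply ln_increasing; lra).
  unfold K in hlnh. nra.
Qed.

Theorem mainTheorem10 (N tau : R) (hN : 0 < N) (htau : 0 < tau < 1) :
  exists C : R, 0 < C /\
    forall (v1 v2 : R -> R) (beta1 beta2 : R),
      radial_solution N tau v1 v2 beta1 beta2 ->
      forall r : R, 0 < r ->
        v1 r + 2 * (N + 1) * ln r <= C /\ v2 r + 2 * ln r <= C.
Proof.
set (c := 2 * (1 - tau^2)).
assert (hc : 0 < c) by (unfold c; nra).
set (Q := ((2*(N+1)+1)^2 + 2*tau*(2*(N+1)+1)*3 + 3^2)).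
assert (hQ : 0 <= Q) by (unfold Q; nra).
set (K0 := Q / c + 2).
assert (hK0 : 2 <= K0) by (unfold K0; assert (0 <= Q/c) by (apply Rdiv_le_0_compat; lra); lra).
exists (ln K0). split.
{ rewrite <- ln_1. apply ln_increasing; lra. }
intros v1 v2 b1 b2 Hs r hr.
destruct (small N tau v1 v2 b1 b2 hN htau Hs) as [h [hh [P1 [P2 [X1 X2]]]]].
assert (Eq := energy_const N tau v1 v2 b1 b2 r h htau Hs hr hh).
assert (Bh : En N tau v1 v2 h <= K0).
{ unfold En, K0. fold c.
  pose proof (Rle_abs (h * Derive v1 h)). pose proof (Rle_abs (- (h * Derive v1 h))).
  pose proof (Rle_abs (h * Derive v2 h)). pose proof (Rle_abs (- (h * Derive v2 h))).
  rewrite Rabs_Ropp in H0, H2.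
  set (q1 := h * Derive v1 h + 2 * (N + 1)) in *.
  set (q2 := h * Derive v2 h + 2) in *.
  assert (2*N+1 <= q1 <= 2*(N+1)+1) by (unfold q1; lra).
  assert (1 <= q2 <= 3) by (unfold q2; lra).
  assert (q1^2 + 2*tau*q1*q2 + q2^2 <= Q).
  { unfold Q.
    assert (q1^2 <= (2*(N+1)+1)^2) by nra.
    assert (q2^2 <= 3^2) by nra.
    assert (q1*q2 <= (2*(N+1)+1)*3) by nra.
    nra. }
  assert ((q1^2 + 2*tau*q1*q2 + q2^2)/c <= Q/c).
  { unfold Rdiv. apply Rmult_le_compat_r; [left; apply Rinv_0_lt_compat; exact hc| exact H5]. }
  lra. }
assert (Lr : forall r, 0 < r -> exp (2*(N+1)*ln r + v1 r) <= En N tau v1 v2 r /\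
                                 exp (2*ln r + v2 r) <= En N tau v1 v2 r).
{ intros s hs. unfold En. fold c.
  set (q1 := s * Derive v1 s + 2 * (N + 1)).
  set (q2 := s * Derive v2 s + 2).
  assert (0 <= (q1^2 + 2*tau*q1*q2 + q2^2)/c).
  { apply Rdiv_le_0_compat; [|exact hc].
    assert (q1^2 + 2*tau*q1*q2 + q2^2 = (q1 + tau*q2)^2 + (1-tau^2)*q2^2) by ring.
    rewrite H. assert (0 <= (1-tau^2)*q2^2) by (apply Rmult_le_pos; nra). pose proof (pow2_ge_0 (q1 + tau*q2)). lra. }
  pose proof (exp_pos (2*(N+1)*ln s + v1 s)). pose proof (exp_pos (2*ln s + v2 s)). lra. }
destruct (Lr r hr) as [L1 L2].
rewrite Eq in L1, L2.
split.
- rewrite Rplus_comm. rewrite <- (ln_exp (2 * (N + 1) * ln r + v1 r)).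
  apply ln_le'; [apply exp_pos|lra].
- rewrite Rplus_comm. rewrite <- (ln_exp (2 * ln r + v2 r)).
  apply ln_le'; [apply exp_pos|lra].
Qed.
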